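(* For $k\in\mathbb{N}^*$ and $0\le r\le k-1$, in $P=\mathbb{Z}[x_1,\dots,x_k,y_1,\dots,y_k]$ we have \[\alpha(k-1,k)\beta(r+1,k)-\alpha(r,k)\beta(k,k)=(-1)^{r+1}y_ky_1\cdots y_r\,\alpha_{r+1}(k-r-2,k).\]
   Context: In $P$ indices are periodic: $x_{i+k}:=x_i$, $y_{i+k}:=y_i$. For $f\in P$ and $s\in\mathbb{N}$ the shift is $f_s:=f(x_{s+1},\dots,x_{s+k},y_{s+1},\dots,y_{s+k})$, and $\alpha_s(r,k):=(\alpha(r,k))_s$. Write $[r]=\{1,\dots,r\}$ ($\emptyset$ if $r\le0$) and $S+1=\{s+1:s\in S\}$. For $0\le r\le k$, $\alpha(r,k):=\sum_{S}\prod_{i\in S}y_i\prod_{j\in[r]\setminus(S\cup(S+1))}x_j$, summed over subsets $S\subseteq\{1,\dots,r-1\}$ with no two consecutive integers (so $\alpha(0,k)=1$); $\alpha(-1,k):=0$. Also $\beta(0,k)=\beta(1,k):=0$ and, for $2\le r\le k+1$, $\beta(r,k):=\sum_S y_k\prod_{i\in S}y_i\prod_{j\in\{2,\dots,r-1\}\setminus(S\cup(S+1))}x_j$, summed over subsets $S\subseteq\{2,\dots,r-2\}$ with no two consecutive integers. *)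

(* Defs.v *)
From HB Require Import structures.
From mathcomp Require Import all_boot all_order all_algebra.
From mathcomp Require Import mpoly.
Set Implicit Arguments. Unset Strict Implicit. Unset Printing Implicit Defensive.
Import GRing.Theory.
Local Open Scope ring_scope.

(* P = Z[x_1..x_k, y_1..y_k] is {mpoly int[k + k]}: variable number
   j (0 <= j < k) is x_{j+1}, variable number k + j is y_{j+1}. *)
Definition P (k : nat) := {mpoly int[k + k]}.

Definition Xn (n j : nat) : {mpoly int[n]} :=
  if insub j is Some o then 'X_o else 0.

(* periodic indices: x_i := x_{((i-1) mod k) + 1}, y_i likewise *)
Definition xv (k i : nat) : P k := Xn (k + k) ((i + k).-1 %% k).
Definition yv (k i : nat) : P k := Xn (k + k) (k + (i + k).-1 %% k).

(* the shift f_s := f(x_{s+1},...,x_{s+k},y_{s+1},...,y_{s+k}) *)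
Definition shift_tuple (k s : nat) : (k + k).-tuple (P k) :=
  [tuple (if (i < k)%N then xv k (s + i.+1) else yv k (s + (i - k).+1))
   | i < k + k].
Definition shift (k s : nat) (f : P k) : P k := f \mPo shift_tuple k s.

Definition memn (n : nat) (S : {set 'I_n}) (j : nat) : bool :=
  [exists i in S, val i == j].

Definition alpha (r k : nat) : P k :=
  \sum_(S : {set 'I_r.+1} |
          [forall i in S, (1 <= val i <= r.-1)%N] &&
          [forall i in S, ~~ memn S (val i).+1])
    ((\prod_(i in S) yv k (val i)) *
     \prod_(1 <= j < r.+1 | ~~ memn S j && ~~ memn S j.-1) xv k j).

(* alpha on integer arguments: alpha(-1,k) = 0 (other negative values are
   never used; they are also set to 0) *)
Definition alphaZ (r : int) (k : nat) : P k :=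
  match r with Posz n => alpha n k | Negz _ => 0 end.

Definition beta (r k : nat) : P k :=
  if (r < 2)%N then 0 else
  \sum_(S : {set 'I_r} |
          [forall i in S, (2 <= val i <= r - 2)%N] &&
          [forall i in S, ~~ memn S (val i).+1])
    (yv k k * (\prod_(i in S) yv k (val i)) *
     \prod_(2 <= j < r | ~~ memn S j && ~~ memn S j.-1) xv k j).

(* Main.v *)
Require Import Defs.
From HB Require Import structures.
From mathcomp Require Import all_boot all_order all_algebra.
From mathcomp Require Import mpoly.
From mathcomp Require Import ring zify.
From Stdlib Require Import FunctionalExtensionality.
Import GRing.Theory.
Local Open Scope ring_scope.

Module Aux.
Set Implicit Arguments. Unset Strict Implicit. Unset Printing Implicit Defensive.
Section Cont.
Variable R : comNzRingType.
Variables X Y : nat -> R.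

Fixpoint C (s l : nat) : R :=
  match l with
  | 0 => 0
  | 1 => 1
  | S ((S l') as m) => X (s + l'.+1) * C s m + Y (s + l') * C s l'
  end.

Lemma C0 s : C s 0 = 0. Proof. by []. Qed.
Lemma C1 s : C s 1 = 1. Proof. by []. Qed.
Lemma CS s l : C s l.+2 = X (s + l.+1) * C s l.+1 + Y (s + l) * C s l.
Proof. by []. Qed.

Lemma C_left l : forall s, C s l.+2 = X s.+1 * C s.+1 l.+1 + Y s.+1 * C s.+2 l.
Proof.
elim/ltn_ind: l => l IH s.
case: l IH => [|[|l]] IH.
- rewrite !CS !C1 !C0 !addn0 addn1; ring.
- rewrite !CS !C1 !C0 !addn0; rewrite !addn1 !addnS addn0; ring.
rewrite CS (IH l.+1 (ltnSn _) s) (IH l (leqW (ltnSn _)) s).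
rewrite (CS s.+1 l.+1) (CS s.+2 l) !addSn !addnS.
ring.
Qed.

Lemma C_ident n r : (r <= n)%N ->
  C 0 n.+1 * C 1 r - C 0 r.+1 * C 1 n =
  (-1) ^+ r.+1 * (\prod_(1 <= i < r.+1) Y i) * C r.+1 (n - r).
Proof.
elim/ltn_ind: r => r IH hrn.
case: r IH hrn => [|[|r]] IH hrn.
- rewrite big_geq // C0 C1 subn0; ring.
- case: n IH hrn => // n _ _.
  rewrite big_nat1 (C_left n 0) (CS 0 0) !C1 C0 subSS subn0 add0n; rewrite addn0 mulr0 addr0 !mulr1 sqrrN expr1n mul1r; by rewrite addrAC subrr add0r.
rewrite (CS 1 r) (CS 0 r.+1).
have E1 := IH r.+1 (ltnSn _) (ltnW hrn).
have E2 := IH r (leqW (ltnSn _)) (ltnW (ltnW hrn)).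
have -> : C 0 n.+1 * (X (1 + r.+1) * C 1 r.+1 + Y (1 + r) * C 1 r) -
  (X (0 + r.+2) * C 0 r.+2 + Y (0 + r.+1) * C 0 r.+1) * C 1 n =
  X r.+2 * (C 0 n.+1 * C 1 r.+1 - C 0 r.+2 * C 1 n) +
  Y r.+1 * (C 0 n.+1 * C 1 r - C 0 r.+1 * C 1 n).
  rewrite add1n add0n; ring.
rewrite E1 E2.
have -> : (n - r = (n - r.+2).+2)%N by lia.
have -> : (n - r.+1 = (n - r.+2).+1)%N by lia.
rewrite C_left.
have H1 : \prod_(1 <= i < r.+3) Y i = \prod_(1 <= i < r.+1) Y i * Y r.+1 * Y r.+2.
  by rewrite big_nat_recr // big_nat_recr.
have H2 : \prod_(1 <= i < r.+2) Y i = \prod_(1 <= i < r.+1) Y i * Y r.+1.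
  by rewrite big_nat_recr.
rewrite H1 H2 !exprS.
ring.
Qed.

End Cont.
Section Split.
Variable n : nat.
Definition wid (S : {set 'I_n}) : {set 'I_n.+1} :=
  [set widen_ord (leqnSn n) i | i in S].
Definition unw (T : {set 'I_n.+1}) : {set 'I_n} :=
  [set i | widen_ord (leqnSn n) i \in T].
Definition gS (p : {set 'I_n} * bool) : {set 'I_n.+1} :=
  if p.2 then ord_max |: wid p.1 else wid p.1.
Definition gS' (T : {set 'I_n.+1}) : {set 'I_n} * bool :=
  (unw T, ord_max \in T).

Lemma in_wid S i : (widen_ord (leqnSn n) i \in wid S) = (i \in S).
Proof.
apply/imsetP/idP => [[j hj /(congr1 val) /= /val_inj ->] //|h].
by exists i.
Qed.

Lemma max_wid S : (ord_max \in wid S) = false.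
Proof.
apply/imsetP => [[j _ /(congr1 val) /= e]].
by move: (ltn_ord j); rewrite -e ltnn.
Qed.

Lemma unw_wid S : unw (wid S) = S.
Proof. by apply/setP => i; rewrite inE in_wid. Qed.

Lemma unw_widU S : unw (ord_max |: wid S) = S.
Proof.
apply/setP => i; rewrite !inE in_wid.
have -> : (widen_ord (leqnSn n) i == ord_max) = false.
  by apply/negbTE/eqP => /(congr1 val) /= e; move: (ltn_ord i); rewrite e ltnn.
by [].
Qed.

Lemma gS_can : cancel gS gS'.
Proof.
move=> [S []]; rewrite /gS /gS' /=.
  by rewrite unw_widU setU11.
by rewrite unw_wid max_wid.
Qed.

Lemma gS'_can : cancel gS' gS.
Proof.
move=> T; rewrite /gS /gS' /=.
have H : forall i : 'I_n.+1, i != ord_max -> (i \in wid (unw T)) = (i \in T).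
  move=> i hi.
  have hlt : (val i < n)%N.
    by have := ltn_ord i; rewrite ltnS leq_eqVlt => /orP [/eqP e|//];
       case/eqP: hi; apply/val_inj.
  have -> : i = widen_ord (leqnSn n) (Ordinal hlt) by apply/val_inj.
  by rewrite in_wid inE.
case: ifP => hm; apply/setP => i; case: (eqVneq i ord_max) => [->|hi].
- by rewrite setU11 hm.
- by rewrite !inE (negbTE hi) /= H.
- by rewrite max_wid hm.
- by rewrite H.
Qed.

Lemma memn_wid S j : memn (wid S) j = memn S j.
Proof.
apply/existsP/existsP => [[i /andP [hi /eqP <-]]|[i /andP [hi /eqP <-]]].
  by case/imsetP: hi => i' hi' ->; exists i'; rewrite hi' eqxx.
by exists (widen_ord (leqnSn n) i); rewrite in_wid hi eqxx.
Qed.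

Lemma memn_widU S j : memn (ord_max |: wid S) j = memn S j || (j == n).
Proof.
apply/existsP/orP => [[i /andP [hi /eqP <-]]|[/existsP [i /andP [hi /eqP <-]]|/eqP ->]].
- move: hi; rewrite in_setU1 => /orP [/eqP ->|hi]; first by right.
  by left; rewrite -memn_wid; apply/existsP; exists i; rewrite hi eqxx.
- by exists (widen_ord (leqnSn n) i); rewrite in_setU1 in_wid hi orbT eqxx.
- by exists ord_max; rewrite setU11 eqxx.
Qed.

Lemma sum_split (R : nmodType) (F : (nat -> bool) -> R) :
  \sum_(T : {set 'I_n.+1}) F (memn T) =
  \sum_(S : {set 'I_n}) (F (memn S) + F (fun j => memn S j || (j == n))).
Proof.
rewrite (reindex gS); last by exists gS' => x _; [apply: gS_can|apply: gS'_can].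
rewrite -(pair_big xpredT xpredT (fun S b => F (memn (gS (S, b))))) /=.
apply: eq_bigr => S _; rewrite big_bool /= addrC; congr (_ + _).
  by congr F; apply: functional_extensionality => j; rewrite memn_wid.
by congr F; apply: functional_extensionality => j; rewrite memn_widU.
Qed.
End Split.
Lemma memn_supp N (S : {set 'I_N}) j : (N <= j)%N -> memn S j = false.
Proof.
move=> h; apply/negbTE/existsP => [[i /andP [_ /eqP e]]].
by move: (ltn_ord i); rewrite e ltnNge h.
Qed.

Lemma memn_val N (S : {set 'I_N}) (i : 'I_N) : memn S (val i) = (i \in S).
Proof.
apply/existsP/idP => [[i' /andP [h /eqP e]]|h]; last by exists i; rewrite h eqxx.
by have <- : i' = i by apply/val_inj.
Qed.

Lemma memn0 N j : memn (set0 : {set 'I_N}) j = false.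
Proof. by apply/negbTE/existsP => [[i]]; rewrite inE. Qed.

Lemma forall_memn N (S : {set 'I_N}) (P : nat -> bool) :
  [forall i in S, P (val i)] = all (fun j => memn S j ==> P j) (iota 0 N).
Proof.
apply/forallP/allP => [H j _|H i].
  by apply/implyP => /existsP [i /andP [hi /eqP <-]]; exact: (implyP (H i) hi).
apply/implyP => hi; have := H (val i); rewrite mem_iota /= add0n ltn_ord memn_val hi.
by move=> /(_ isT).
Qed.

Section Dsum.
Variable R : comNzRingType.
Variables X Y : nat -> R.

Definition dsum (a m : nat) : R :=
  \sum_(S : {set 'I_m.+1} |
          [forall i in S, (a <= val i <= m.-1)%N] &&
          [forall i in S, ~~ memn S (val i).+1])
    ((\prod_(i in S) Y (val i)) *
     \prod_(a <= j < m.+1 | ~~ memn S j && ~~ memn S j.-1) X j).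

Definition okp (p : nat -> bool) a m :=
  all (fun j => p j ==> ((a <= j <= m.-1)%N && ~~ p j.+1)) (iota 0 m.+1).
Definition wt (p : nat -> bool) a m :=
  (\prod_(0 <= j < m.+1 | p j) Y j) * \prod_(a <= j < m.+1 | ~~ p j && ~~ p j.-1) X j.
Definition Fm a m p := if okp p a m then wt p a m else 0.

Lemma dsumE a m : dsum a m = \sum_(S : {set 'I_m.+1}) Fm a m (memn S).
Proof.
rewrite /dsum big_mkcond; apply: eq_bigr => S _.
rewrite /Fm /okp /wt (forall_memn S (fun j => a <= j <= m.-1)%N) (forall_memn S (fun j => ~~ memn S j.+1)) -all_predI.
have -> : all (predI (fun j => memn S j ==> (a <= j <= m.-1)%N)
                      (fun j => memn S j ==> ~~ memn S j.+1)) (iota 0 m.+1) =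
          all (fun j => memn S j ==> ((a <= j <= m.-1)%N && ~~ memn S j.+1)) (iota 0 m.+1).
  by apply: eq_all => j /=; case: (memn S j).
case: ifP => // _; congr (_ * _).
by rewrite big_mkord; apply: eq_bigl => i; rewrite memn_val.
Qed.

Lemma okpP (p : nat -> bool) a m : (forall j, (m < j)%N -> p j = false) ->
  reflect (forall j, p j -> (a <= j <= m.-1)%N && ~~ p j.+1) (okp p a m).
Proof.
move=> sup; apply: (iffP allP) => H j.
  move=> hj; have hj' : j \in iota 0 m.+1.
    rewrite mem_iota add0n /= ltnS; case: (leqP j m) => // /sup; by rewrite hj.
  exact: (implyP (H j hj') hj).
by move=> _; apply/implyP; exact: H.
Qed.

Lemma okp_false (p : nat -> bool) a m j : p j -> (j <= m)%N -> (m.-1 < j)%N -> okp p a m = false.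
Proof.
move=> pj hjm hj; apply/negbTE/allP => H.
have : j \in iota 0 m.+1 by rewrite mem_iota add0n.
move/H; rewrite pj /= => /andP [/andP [_ h] _].
by move: hj; rewrite ltnNge h.
Qed.

Lemma prod_recr lo hi (P : pred nat) (F : nat -> R) : (lo <= hi)%N ->
  \prod_(lo <= j < hi.+1 | P j) F j =
  (\prod_(lo <= j < hi | P j) F j) * (if P hi then F hi else 1).
Proof. by move=> h; rewrite big_mkcond big_nat_recr // -big_mkcond. Qed.

Lemma prod_eqP lo hi (P Q : pred nat) (F : nat -> R) :
  (forall j, (lo <= j < hi)%N -> P j = Q j) ->
  \prod_(lo <= j < hi | P j) F j = \prod_(lo <= j < hi | Q j) F j.
Proof. move=> H; rewrite big_mkcond [RHS]big_mkcond; apply: eq_big_nat => j hj; by rewrite H. Qed.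


Lemma FmP1 (p : nat -> bool) a m : (forall j, (m < j)%N -> p j = false) ->
  (a <= m.+2)%N -> Fm a m.+2 p = X m.+2 * Fm a m.+1 p.
Proof.
move=> sup ha.
have sup1 : forall j, (m.+1 < j)%N -> p j = false by move=> j hj; apply: sup; lia.
have sup2 : forall j, (m.+2 < j)%N -> p j = false by move=> j hj; apply: sup; lia.
rewrite /Fm.
have -> : okp p a m.+2 = okp p a m.+1.
  apply/(okpP a sup2)/(okpP a sup1) => H j hj; have := H j hj;
  case/andP => h1 ->; rewrite andbT;
  (have : (j <= m)%N by case: (leqP j m) => // /sup; rewrite hj);
  move=> hjm; move: h1 => /andP [h0 _]; rewrite h0 /=; lia.
case: ifP => _; last by rewrite mulr0.
rewrite /wt (prod_recr _ _ (leq0n _)) (sup m.+2) //.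
rewrite (prod_recr _ _ ha) (sup m.+2) // (sup m.+1) //=.
ring.
Qed.

Lemma FmP2 (p : nat -> bool) a m : (forall j, (m < j)%N -> p j = false) ->
  (0 < a)%N -> (a <= m.+1)%N ->
  Fm a m.+2 (fun j => p j || (j == m.+1)) = Y m.+1 * Fm a m p.
Proof.
move=> sup ha0 ha.
set q := fun j => p j || (j == m.+1).
have supq : forall j, (m.+2 < j)%N -> q j = false.
  move=> j hj; rewrite /q sup; last by lia.
  by apply/negbTE; rewrite neq_ltn; apply/orP; right; lia.
rewrite /Fm.
have -> : okp q a m.+2 = okp p a m.
  apply/(okpP a supq)/(okpP a sup) => H j hj.
  - have hjm : (j <= m)%N by case: (leqP j m) => // /sup; rewrite hj.
    have := H j; rewrite /q hj /= => /(_ isT) /andP [/andP [h0 h1]].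
    rewrite negb_or => /andP [-> h2]; rewrite h0 andbT /=.
    move: h2; rewrite eqSS; lia.
  - move: hj; rewrite /q => /orP [hj|/eqP ->].
      have := H j hj => /andP [/andP [h0 h1] h2].
      rewrite negb_or h2 h0 /=; apply/andP; split; first by lia.
      rewrite eqSS; apply/negP => /eqP e; lia.
    rewrite ha /= (sup m.+2) //= eqSS; apply/negP => /eqP; lia.
case: ifP => _; last by rewrite mulr0.
rewrite /wt (prod_recr _ _ (leq0n _)) (prod_recr _ _ (leq0n _)).
rewrite (prod_recr _ _ (leqW ha)) (prod_recr _ _ ha).
have hq1 : q m.+1 = true by rewrite /q eqxx orbT.
have hq2 : q m.+2 = false by rewrite /q sup //; apply/negbTE/eqP; lia.
have hq2' : q (m.+2).-1 = true by exact: hq1.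
rewrite hq2' ?hq1 hq2 /= ?andbF.
have qp : forall j, (j < m.+1)%N -> q j = p j.
  by move=> j hj; rewrite /q; case: eqP => [e|_]; [lia|rewrite orbF].
rewrite (prod_eqP (Q := p)); last by move=> j /andP [_ hj]; apply: qp.
rewrite (prod_eqP (P := fun j => ~~ q j && ~~ q j.-1)
   (Q := fun j => ~~ p j && ~~ p j.-1)); last first.
  by move=> j /andP [_ hj]; rewrite !qp //; lia.
ring.
Qed.

Lemma Fm0 (p : nat -> bool) a m j : p j -> (j <= m)%N -> (m.-1 < j)%N -> Fm a m p = 0.
Proof. by move=> pj h1 h2; rewrite /Fm (okp_false a pj h1 h2). Qed.

Lemma dsum_rec a m : (0 < a)%N -> (a <= m.+1)%N ->
  dsum a m.+2 = X m.+2 * dsum a m.+1 + Y m.+1 * dsum a m.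
Proof.
move=> ha0 ha.
rewrite !dsumE sum_split.
rewrite (eq_bigr (fun S => Fm a m.+2 (memn S))); last first.
  by move=> S _; rewrite [X in _ + X](@Fm0 _ a m.+2 m.+2) ?eqxx ?orbT // addr0.
rewrite sum_split [X in _ = _ * X + _]sum_split.
rewrite mulr_sumr mulr_sumr -big_split; apply: eq_bigr => S _.
have sup : forall j, (m < j)%N -> memn S j = false by move=> j hj; apply: memn_supp.
rewrite [X in _ = _ * (_ + X) + _](@Fm0 _ a m.+1 m.+1) ?eqxx ?orbT // addr0.
by rewrite FmP1 // ?FmP2 //; lia.
Qed.

Lemma dsum_small a m : (m.-1 < a)%N ->
  dsum a m = \prod_(a <= j < m.+1) X j.
Proof.
move=> h; rewrite /dsum (big_pred1 set0); last first.
  move=> S /=; apply/idP/eqP => [/andP [/forallP H _]|->].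
    apply/setP => i; rewrite inE; apply/negbTE/negP => hi.
    by have := H i; rewrite hi /= => /andP [h1 h2]; lia.
  by apply/andP; split; apply/forallP => i; rewrite inE.
rewrite big_set0 mul1r; apply: eq_bigl => j; by rewrite !memn0.
Qed.

Lemma dsum_C t d : dsum t.+1 (t + d) = C X Y t d.+1.
Proof.
elim/ltn_ind: d => d IH.
case: d IH => [|[|d]] IH.
- by rewrite addn0 dsum_small ?big_geq //; lia.
- rewrite dsum_small; last by lia.
  by rewrite addn1 big_nat1 CS C1 C0 addn0 ?addn1 mulr1 mulr0 addr0.
rewrite !addnS (dsum_rec (m := t + d)); [|lia|lia].
rewrite -!addnS (IH d.+1) // (IH d) //.
Qed.

End Dsum.
Lemma C_shift (R : comNzRingType) (X Y : nat -> R) (s t l : nat) :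
  C (fun j => X (s + j)%N) (fun j => Y (s + j)%N) t l = C X Y (s + t)%N l.
Proof.
elim/ltn_ind: l => l IH; case: l IH => [|[|l]] IH //.
by rewrite !CS (IH l.+1) // (IH l) // !addnA.
Qed.
Lemma alphaC m k : alpha m k = C (xv k) (yv k) 0 m.+1.
Proof. by rewrite -(dsum_C (xv k) (yv k) 0 m). Qed.

Lemma betaC r k : beta r.+1 k = yv k k * C (xv k) (yv k) 1 r.
Proof.
case: r => [|r]; first by rewrite /beta /= mulr0.
rewrite -(dsum_C (xv k) (yv k) 1 r) /beta /= /dsum mulr_sumr.
rewrite add1n; apply: eq_big => [S|S _]; last by rewrite mulrA.
by rewrite subSS subSS subn0.
Qed.

Lemma dsum_morph (R S : comNzRingType) (f : {rmorphism R -> S}) (X Y : nat -> R) a m :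
  f (dsum X Y a m) = dsum (fun j => f (X j)) (fun j => f (Y j)) a m.
Proof.
rewrite /dsum rmorph_sum; apply: eq_bigr => T _.
by rewrite rmorphM !rmorph_prod.
Qed.

Lemma shift_xv k s j : (0 < k)%N -> shift s (xv k j) = xv k (s + j).
Proof.
move=> hk; rewrite /shift /xv.
have h : ((j + k).-1 %% k < k + k)%N by rewrite (leq_trans (ltn_pmod _ hk)) // leq_addr.
rewrite /Xn insubT comp_mpolyXU -tnth_nth tnth_mktuple /= ltn_pmod //.
congr Xn.
rewrite (_ : (s + ((j + k).-1 %% k).+1 + k).-1 = s + (j + k).-1 %% k + k)%N; last by rewrite addnS addSn.
rewrite modnDr modnDmr; congr modn; lia.
Qed.

Lemma shift_yv k s j : (0 < k)%N -> shift s (yv k j) = yv k (s + j).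
Proof.
move=> hk; rewrite /shift /yv.
have h : (k + (j + k).-1 %% k < k + k)%N by rewrite ltn_add2l ltn_pmod.
rewrite /Xn insubT comp_mpolyXU -tnth_nth tnth_mktuple /= ltnNge leq_addr /= addKn.
congr Xn; congr addn.
rewrite (_ : (s + ((j + k).-1 %% k).+1 + k).-1 = s + (j + k).-1 %% k + k)%N; last by rewrite addnS addSn.
rewrite modnDr modnDmr; congr modn; lia.
Qed.

Lemma shift_alpha k s m : (0 < k)%N ->
  shift s (alpha m k) = C (xv k) (yv k) s m.+1.
Proof.
move=> hk.
have -> : shift s (alpha m k) = comp_mpoly (shift_tuple k s) (dsum (xv k) (yv k) 1 m) by [].
rewrite dsum_morph.
have -> : (fun j => comp_mpoly (shift_tuple k s) (xv k j)) = (fun j => xv k (s + j)%N).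
  by apply: functional_extensionality => j; apply: shift_xv.
have -> : (fun j => comp_mpoly (shift_tuple k s) (yv k j)) = (fun j => yv k (s + j)%N).
  by apply: functional_extensionality => j; apply: shift_yv.
by rewrite (dsum_C _ _ 0 m) C_shift addn0.
Qed.
End Aux.
Import Aux.
Unset Implicit Arguments.

Theorem lemma4p2 (k r : nat) (hk : (0 < k)%N) (hr : (r <= k - 1)%N) :
  alpha (k - 1) k * beta r.+1 k - alpha r k * beta k k =
  (-1) ^+ r.+1 * yv k k * (\prod_(1 <= i < r.+1) yv k i) *
    shift (r.+1) (alphaZ (k%:Z - r%:Z - 2) k).
Proof.
case: k hk hr => // n _; rewrite subSS subn0 => hr.
rewrite !alphaC !betaC.
have E := C_ident (xv n.+1) (yv n.+1) hr.
have -> : C (xv n.+1) (yv n.+1) 0 n.+1 * (yv n.+1 n.+1 * C (xv n.+1) (yv n.+1) 1 r) -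
    C (xv n.+1) (yv n.+1) 0 r.+1 * (yv n.+1 n.+1 * C (xv n.+1) (yv n.+1) 1 n) =
    yv n.+1 n.+1 * (C (xv n.+1) (yv n.+1) 0 n.+1 * C (xv n.+1) (yv n.+1) 1 r -
    C (xv n.+1) (yv n.+1) 0 r.+1 * C (xv n.+1) (yv n.+1) 1 n) by ring.
rewrite E.
case: (ltnP r n) => hrn.
  have -> : (n.+1%:Z - r%:Z - 2 = (n - r.+1)%N%:Z)%R by lia.
  rewrite /alphaZ shift_alpha //.
  have -> : ((n - r.+1).+1 = n - r)%N by lia.
  ring.
have -> : r = n by apply/eqP; rewrite eqn_leq hr hrn.
have -> : (n.+1%:Z - n%:Z - 2 = Negz 0)%R by rewrite NegzE; lia.
rewrite /alphaZ /shift comp_mpoly0 subnn C0; ring.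
Qed.
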